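(* Assume the standing assumptions in the context. Let $S\subseteq S^*$, $i\in[d]\setminus S$, $n\ge2$, and let $\beta\in\mathbb{R}^d$ be deterministic with $\mathrm{supp}(\beta)\subseteq S$ and $\|\beta\|_2\le 2/\sqrt\rho$. Let $(X_j,Y_j)_{j\in[n]}$ be i.i.d. copies of $(x,y)$, $U_j=|X_{j,i}(X_j^\top\beta-Y_j)|$, and $\tilde V_{i,n}=\frac{1}{n(n-1)}\sum_{1\le l<j\le n}(U_j-U_l)^2$. Then $$\mathbb{E}[\tilde V_{i,n}]\le 20\frac{LM^2}{\rho}.$$
   Context: Standing assumptions: $(x,y)$ random with $x\in\mathbb{R}^d$, $y\in\mathbb{R}$; $\mathbb{E}[x]=0$; $y=\langle\beta^*,x\rangle+\epsilon$ with $\mathbb{E}[\epsilon\mid x]=0$; $S^*=\mathrm{supp}(\beta^* )$, $s^*=|S^*|$; $\Sigma$ the covariance of $x$, $\Sigma_F$ its principal submatrix on $F$; there are $0<\rho\le L$ with all eigenvalues of $\Sigma_F$ in $[\rho,L]$ for all $|F|=s^*$; $|y|<1$ and $\|x\|_\infty<M$ almost surely. $X_{j,i}$ is the $i$-th coordinate of $X_j$. *)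

(* Defs.v *)
From HB Require Import structures.
From mathcomp Require Import all_boot all_order all_algebra.
From mathcomp Require Import all_classical all_reals all_analysis.
Set Implicit Arguments. Unset Strict Implicit. Unset Printing Implicit Defensive.
Import Order.TTheory GRing.Theory Num.Theory.
Local Open Scope classical_set_scope.
Local Open Scope ring_scope.

(* The random vector x : T -> R^d, encoded coordinatewise, packed as a d-tuple
   (d.-tuple R carries MathComp-Analysis' product sigma-algebra). *)
Definition vec_of {T : Type} {R : Type} (d : nat) (x : 'I_d -> T -> R)
  : T -> d.-tuple R := fun w => [tuple x k w | k < d].

Definition joint {T : Type} {R : Type} (d : nat) (x : 'I_d -> T -> R)
  (y : T -> R) : T -> d.-tuple R * R := fun w => (vec_of x w, y w).

Definition inner {T : Type} {R : pzRingType} (d : nat) (b : 'I_d -> R)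
  (x : 'I_d -> T -> R) : T -> R := fun w => \sum_(k < d) b k * x k w.

(* E[eps | x] = 0 : eps is integrable and E[eps 1_A] = 0 for every A in the
   sigma-algebra sigma(x) generated by x *)
Definition cond_exp_zero {dT} {T : measurableType dT} {R : realType}
  (P : probability T R) (d : nat) (x : 'I_d -> T -> R) (eps : T -> R) : Prop :=
  P.-integrable setT (EFin \o eps) /\
  forall A : set T, preimage_set_system setT (vec_of x) measurable A ->
    ('E_P[(fun w => eps w * \1_A w)%R] = 0)%E.

Definition covmx {dT} {T : measurableType dT} {R : realType}
  (P : probability T R) (d : nat) (x : 'I_d -> T -> R) : 'M[R]_d :=
  \matrix_(a, b) fine (covariance P (x a) (x b)).

Definition principal_submx {R : Type} (d : nat) (S : 'M[R]_d) (F : {set 'I_d})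
  : 'M[R]_#|F| := \matrix_(a, b) S (enum_val a) (enum_val b).

Definition supp {R : pzRingType} (d : nat) (b : 'I_d -> R) : {set 'I_d} :=
  [set k | b k != 0].

Definition iid_copies {dT dT'} {T : measurableType dT} {T' : measurableType dT'}
  {R : realType} (P : probability T R) (P' : probability T' R) (d n : nat)
  (x : 'I_d -> T -> R) (y : T -> R)
  (X : 'I_n -> 'I_d -> T' -> R) (Y : 'I_n -> T' -> R) : Prop :=
  (forall j (A : set (d.-tuple R * R)), measurable A ->
     P' (joint (X j) (Y j) @^-1` A) = P (joint x y @^-1` A)) /\
  (forall A : 'I_n -> set (d.-tuple R * R), (forall j, measurable (A j)) ->
     P' (\bigcap_(j in [set: 'I_n]) (joint (X j) (Y j) @^-1` A j))
     = (\prod_(j < n) P' (joint (X j) (Y j) @^-1` A j))%E).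

(* Main.v *)
Require Import Defs.
From HB Require Import structures.
From mathcomp Require Import all_boot all_order all_algebra.
From mathcomp Require Import all_classical all_reals all_analysis.
From mathcomp Require Import measurable_realfun.
From mathcomp Require Import complex ring lra.
Import Order.TTheory GRing.Theory Num.Theory.
Local Open Scope classical_set_scope.
Local Open Scope ring_scope.

Section H.
Context {R : realType}.

Lemma mfun_sum_ord {d} {T : measurableType d} n (P : pred 'I_n)
  (h : 'I_n -> T -> R) : (forall i, measurable_fun setT (h i)) ->
  measurable_fun setT (fun w => \sum_(i < n | P i) h i w).
Proof.
move=> mh.
have -> : (fun w => \sum_(i < n | P i) h i w) =
   (fun w => \sum_(i <- index_enum 'I_n) (if P i then h i w else 0)).
  by apply: funext => w; rewrite big_mkcond.
apply: measurable_sum => i; case: (P i) => //; exact: measurable_cst.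
Qed.

Lemma int_bounded {d} {T : measurableType d} (P : probability T R) (f : T -> R)
  (c : R) : 0 <= c -> measurable_fun setT f -> {ae P, forall w, `|f w| <= c} ->
  P.-integrable setT (EFin \o f).
Proof.
move=> c0 mf hb; apply/integrableP; split; first exact/measurable_EFinP.
apply: (@le_lt_trans _ _ (c%:E * P setT)%E).
  apply: integral_le_bound => //; first exact/measurable_EFinP.
  by apply: filterS hb => w hw _ /=; rewrite lee_fin.
by rewrite probability_setT mule1 ltey.
Qed.

Lemma transfer {d1 d2 dV} (T1 : measurableType d1) (T2 : measurableType d2)
  (V : measurableType dV) (P1 : {measure set T1 -> \bar R})
  (P2 : {measure set T2 -> \bar R}) (phi1 : T1 -> V) (phi2 : T2 -> V)
  (g : V -> \bar R) : measurable_fun setT phi1 -> measurable_fun setT phi2 ->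
  measurable_fun setT g -> (forall v, (0 <= g v)%E) ->
  (forall A, measurable A -> P1 (phi1 @^-1` A) = P2 (phi2 @^-1` A)) ->
  (\int[P1]_x g (phi1 x) = \int[P2]_x g (phi2 x))%E.
Proof.
move=> m1 m2 mg g0 hA.
have -> : (\int[P1]_x g (phi1 x) = \int[pushforward P1 phi1]_y g y)%E.
  by rewrite ge0_integral_pushforward.
have -> : (\int[P2]_x g (phi2 x) = \int[pushforward P2 phi2]_y g y)%E.
  by rewrite ge0_integral_pushforward.
apply: eq_measure_integral => A mA _; exact: hA.
Qed.

End H.
Section LA.
Variable R : rcfType.
Local Notation C := (R[i]).
Local Notation f := (real_complex R).

Lemma quad_expand n (P : 'M[C]_n) (D : 'I_n -> C) (w : 'I_n -> C) :
  (forall a, (w a)^* = w a) ->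
  \sum_a \sum_b w a * (\sum_k (P k a)^* * D k * P k b) * w b =
  \sum_k D k * ((\sum_b P k b * w b)^* * (\sum_b P k b * w b)).
Proof.
move=> wr.
transitivity (\sum_a \sum_b \sum_k D k * ((P k a * w a)^* * (P k b * w b))).
  apply: eq_bigr => a _; apply: eq_bigr => b _.
  rewrite big_distrr big_distrl /=; apply: eq_bigr => k _.
  rewrite rmorphM /= wr. move: (w a) (w b) (P k a)^* (D k) (P k b) => x1 x2 x3 x4 x5. by rewrite !mulrA (mulrC x1) (mulrC _ x4) !mulrA.
under eq_bigr do rewrite exchange_big /=.
rewrite exchange_big /=; apply: eq_bigr => k _.
rewrite rmorph_sum /= big_distrl /= big_distrr /=; apply: eq_bigr => a _.
rewrite big_distrr /= big_distrr /=; apply: eq_bigr => b _.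
by [].
Qed.


Local Open Scope sesquilinear_scope.
Lemma fconj (x : R) : (f x)^* = f x.
Proof.
apply: conj_Creal; rewrite realE -(rmorph0 (real_complex R)) !lecR; exact: le_total.
Qed.

Lemma real_f {x : C} : x \is Num.real -> x = f (complex.Re x).
Proof. by move/Creal_ReP => h; rewrite complexRe h. Qed.

Lemma rayleigh n (A : 'M[R]_n) (L : R) (w : 'I_n -> R) :
  A^T = A -> (forall a, eigenvalue A a -> a <= L) ->
  \sum_a \sum_b w a * A a b * w b <= L * \sum_a w a ^+ 2.
Proof.
move=> Asym eigL.
set AC := map_mx f A.
have herm : AC \is hermsymmx.
  apply/is_hermitianmxP; rewrite expr0 scale1r; apply/matrixP => i j.
  rewrite !mxE fconj -[in RHS]Asym mxE //.
set P := spectralmx AC; set D := spectral_diag AC.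
have hA : AC = invmx P *m diag_mx D *m P.
  exact/orthomx_spectralP/hermitian_normalmx.
have Pu : P \is unitarymx := spectral_unitarymx AC.
have PPt : P *m P^t* = 1%:M by apply/unitarymxP.
have PtP : P^t* *m P = 1%:M by apply: mulmx1C.
rewrite invmx_unitary // in hA.
have ACe : forall a b, AC a b = \sum_k (P k a)^* * D 0 k * P k b.
  move=> a b; rewrite hA mxE; apply: eq_bigr => k _.
  by rewrite mul_mx_diag !mxE.
have Ie : forall a b, (1%:M : 'M[C]_n) a b = \sum_k (P k a)^* * 1 * P k b.
  move=> a b; rewrite -PtP mxE; apply: eq_bigr => k _.
  by rewrite !mxE mulr1.
have Dreal : forall k, D 0 k \is Num.real.
  by move=> k; apply: (mxOverP (hermitian_spectral_diag_real herm)).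
have Deig : forall k, eigenvalue AC (D 0 k).
  move=> k; apply/eigenvalueP; exists (row k P).
    rewrite -row_mul hA !mulmxA PPt mul1mx mul_diag_mx; apply/rowP => j.
    by rewrite !mxE.
  apply/eqP => h; have := congr1 (fun M => M *m P^t*) h.
  rewrite -row_mul PPt mul0mx => /rowP/(_ k); rewrite !mxE eqxx /= => /eqP.
  by rewrite oner_eq0.
have DleL : forall k, D 0 k <= f L.
  move=> k; rewrite (real_f (Dreal k : D 0 k \is Num.real)) lecR; apply: eigL.
  have := Deig k; rewrite (real_f (Dreal k : D 0 k \is Num.real)) !eigenvalue_root_char.
  by rewrite -map_char_poly fmorph_root.
set z := fun k => \sum_b P k b * f (w b).
have lhsE : f (\sum_a \sum_b w a * A a b * w b) = \sum_k D 0 k * ((z k)^* * z k).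
  rewrite -(@quad_expand _ P (fun k => D 0 k) (fun a => f (w a))); last by move=> a; exact: fconj.
  rewrite rmorph_sum; apply: eq_bigr => a _; rewrite rmorph_sum; apply: eq_bigr => b _.
  by rewrite -ACe !rmorphM /= mxE.
have rhsE : f (\sum_a w a ^+ 2) = \sum_k 1 * ((z k)^* * z k).
  rewrite -(@quad_expand _ P (fun k => 1) (fun a => f (w a))); last by move=> a; exact: fconj.
  rewrite rmorph_sum; apply: eq_bigr => a _.
  under eq_bigr do rewrite -Ie.
  rewrite (bigD1 a) //= big1 => [|b nb]; last by rewrite !mxE eq_sym (negbTE nb) mulr0n mulr0 mul0r.
  by rewrite !mxE eqxx mulr1n mulr1 addr0 rmorphXn /= expr2.
rewrite -lecR rmorphM /= lhsE rhsE big_distrr /=; apply: ler_sum => k _.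
rewrite mul1r; apply: ler_wpM2r => //.
by rewrite mulrC mul_conjC_ge0.
Qed.
End LA.

Section C.
Context {R : realType}.

Lemma reindex_quad dd (S : 'M[R]_dd) (F : {set 'I_dd}) (b : 'I_dd -> R) (L : R) :
  S^T = S -> (forall k, k \notin F -> b k = 0) ->
  (forall a, eigenvalue (principal_submx S F) a -> a <= L) ->
  \sum_a \sum_c b a * S a c * b c <= L * \sum_a b a ^+ 2.
Proof.
move=> Ssym bF eig.
have sym : (principal_submx S F)^T = principal_submx S F.
  apply/matrixP => a c; rewrite !mxE -[in RHS]Ssym mxE //.
have := @rayleigh _ _ _ L (fun a => b (enum_val a)) sym eig.
have red : forall G : 'I_dd -> R, (forall k, k \notin F -> G k = 0) ->
    \sum_k G k = \sum_(a < #|F|) G (enum_val a).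
  move=> G hG; rewrite -big_enum_val [LHS](bigID (mem F)) /=.
  by rewrite [X in _ + X]big1 ?addr0 // => k kF; apply: hG.
have e1 : \sum_a b a ^+ 2 = \sum_(a < #|F|) b (enum_val a) ^+ 2.
  by apply: (red (fun a => b a ^+ 2)) => k kF; rewrite bF // expr0n.
have e2 : \sum_a \sum_c b a * S a c * b c =
  \sum_(a < #|F|) \sum_(c < #|F|) b (enum_val a) * principal_submx S F a c * b (enum_val c).
  rewrite (red (fun a => \sum_c b a * S a c * b c)); last first.
    by move=> k kF; rewrite big1 // => c _; rewrite bF // !mul0r.
  apply: eq_bigr => a _; rewrite (red (fun c => b (enum_val a) * S (enum_val a) c * b c)).
    by apply: eq_bigr => c _; rewrite mxE.
  by move=> k kF; rewrite (bF k kF) mulr0.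
by rewrite e1 e2.
Qed.


Lemma second_moment {d} {T : measurableType d} (P : probability T R) dd
  (x : 'I_dd -> T -> R) (b : 'I_dd -> R) (M : R) :
  (forall k, measurable_fun setT (x k)) -> (forall k, 'E_P[x k] = 0)%E ->
  {ae P, forall w, forall k, `|x k w| < M} ->
  (\int[P]_w ((inner b x w) ^+ 2)%:E =
     (\sum_a \sum_c b a * covmx P x a c * b c)%:E)%E.
Proof.
move=> mx Ex hx.
set h := fun a c w => b a * b c * (x a w * x c w).
have mh : forall a c, measurable_fun setT (h a c).
  move=> a c; apply: measurable_funM; first exact: measurable_cst.
  exact: measurable_funM.
have inth : forall a c, P.-integrable setT (EFin \o h a c).
  move=> a c; apply: (@int_bounded _ _ _ _ _ (`|b a| * `|b c| * M ^+ 2)) => //.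
    by rewrite mulr_ge0 ?sqr_ge0 // mulr_ge0.
  apply: filterS hx => w hw; rewrite /h normrM [`|b a * b c|]normrM.
  apply: ler_wpM2l; first by rewrite mulr_ge0.
  rewrite normrM expr2; apply: ler_pM => //; exact: ltW.
have intx : forall a c, P.-integrable setT (EFin \o (fun w => x a w * x c w)).
  move=> a c; apply: (@int_bounded _ _ _ _ _ (M ^+ 2)) => //.
    exact: sqr_ge0.
    exact: measurable_funM.
  apply: filterS hx => w hw; rewrite normrM expr2; apply: ler_pM => //; exact: ltW.
have covE : forall a c, (covmx P x a c)%:E = (\int[P]_w (x a w * x c w)%:E)%E.
  move=> a c; rewrite mxE.
  have -> : covariance P (x a) (x c) = (\int[P]_w (x a w * x c w)%:E)%E.
    rewrite covariance.unlock !Ex /= expectation.unlock; apply: eq_integral => w _.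
    by rewrite (_ : ((x a \- cst 0) * (x c \- cst 0)) w = (x a w - 0) * (x c w - 0)) // !subr0.
  by rewrite fineK //; apply: integrable_fin_num => //; exact: intx.
have sqE : forall w, inner b x w ^+ 2 = \sum_a \sum_c h a c w.
  move=> w; rewrite /inner expr2 big_distrl /=; apply: eq_bigr => a _.
  rewrite big_distrr /=; apply: eq_bigr => c _; rewrite /h; ring.
under eq_integral do rewrite sqE -sumEFin.
rewrite (integral_sum measurableT); last first.
  move=> a; under eq_fun do rewrite -sumEFin.
  by apply: (integrable_sum measurableT) => c _; exact: inth.
rewrite -sumEFin; apply: eq_bigr => a _.
under eq_integral do rewrite -sumEFin.
rewrite (integral_sum measurableT); last by move=> c; exact: inth.
rewrite -sumEFin; apply: eq_bigr => c _.
rewrite /h; under eq_integral do rewrite EFinM.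
rewrite (integralZl measurableT (intx a c)).
by rewrite -covE -EFinM; congr (_%:E); ring.
Qed.

Lemma pair_sum n (a : 'I_n -> R) : (0 < n)%N ->
  \sum_(l < n) \sum_(j < n | (l < j)%N) (a j + a l) = (n - 1)%:R * \sum_j a j.
Proof.
move=> n0.
have e : forall l : 'I_n, \sum_(j < n | (l < j)%N) (a j + a l) =
   \sum_(j < n) (if (l < j)%N then a j else 0) + \sum_(j < n) (if (l < j)%N then a l else 0).
  by move=> l; rewrite big_split /= !(big_mkcond (fun j : 'I_n => (l < j)%N)).
rewrite (eq_bigr _ (fun l _ => e l)) big_split /= [X in _ + X]exchange_big /=.
rewrite -big_split /=; under eq_bigr do rewrite -big_split /=.
have e2 : forall l : 'I_n, \sum_(j < n) ((if (l < j)%N then a j else 0) + (if (j < l)%N then a j else 0))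
    = \sum_(j < n) a j - a l.
  move=> l; rewrite [X in _ = X - _](bigD1 l) //= addrAC subrr add0r.
  rewrite [RHS]big_mkcond /=; apply: eq_bigr => j _.
  have [h|h|/val_inj e'] := ltngtP l j.
  - rewrite (_ : (j != l) = true) ?addr0 //.
    by apply/eqP => e'; move: h; rewrite e' ltnn.
  - rewrite (_ : (j != l) = true) ?add0r //.
    by apply/eqP => e'; move: h; rewrite e' ltnn.
  - by subst j; rewrite eqxx addr0.
rewrite (eq_bigr _ (fun l _ => e2 l)) sumrB sumr_const card_ord natrB //.
by rewrite mulrBl mul1r mulr_natl.
Qed.

Lemma final_arith (L rho M2 qv s : R) : 0 < rho -> rho <= L -> 0 <= M2 ->
  qv <= L * s -> s <= 4 / rho -> M2 * 2 * qv + M2 * 2 <= 20 * L * M2 / rho.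
Proof.
move=> r0 rL M0 hq hs.
set r := L / rho.
have r1 : 1 <= r by rewrite /r ler_pdivlMr // mul1r.
have L0 : 0 <= L by apply: le_trans rL; exact: ltW.
have hq' : qv <= 4 * r.
  apply: (le_trans hq); apply: le_trans (ler_wpM2l L0 hs) _.
  by rewrite /r mulrCA.
have -> : 20 * L * M2 / rho = 20 * M2 * r by rewrite /r; field; exact: lt0r_neq0.
nra.
Qed.
End C.
Theorem mainTheorem6
  (R : realType) (dT dT' : measure_display)
  (T : measurableType dT) (P : probability T R)
  (d : nat) (x : 'I_d -> T -> R) (y : T -> R) (betastar : 'I_d -> R)
  (rho L M : R)
  (hxm : forall k, measurable_fun setT (x k))
  (hym : measurable_fun setT y)
  (hEx : forall k, ('E_P[x k] = 0)%E)
  (hcond : cond_exp_zero P x (fun w => y w - inner betastar x w))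
  (hrho : 0 < rho) (hrhoL : rho <= L)
  (heig : forall F : {set 'I_d}, #|F| = #|supp betastar| ->
     forall a : R, eigenvalue (principal_submx (covmx P x) F) a ->
       rho <= a <= L)
  (hy : {ae P, forall w, `|y w| < 1})
  (hx : {ae P, forall w, forall k, `|x k w| < M})
  (S : {set 'I_d}) (hS : S \subset supp betastar)
  (i : 'I_d) (hi : i \notin S)
  (n : nat) (hn : (2 <= n)%N)
  (beta : 'I_d -> R) (hbeta : supp beta \subset S)
  (hnorm : Num.sqrt (\sum_(k < d) beta k ^+ 2) <= 2 / Num.sqrt rho)
  (T' : measurableType dT') (P' : probability T' R)
  (X : 'I_n -> 'I_d -> T' -> R) (Y : 'I_n -> T' -> R)
  (hXm : forall j k, measurable_fun setT (X j k))
  (hYm : forall j, measurable_fun setT (Y j))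
  (hiid : iid_copies P P' x y X Y) :
  let U := fun (j : 'I_n) (w : T') =>
    `|X j i w * (inner beta (X j) w - Y j w)| in
  let Vt := fun w : T' =>
    (n * (n - 1))%:R^-1 *
      \sum_(l < n) \sum_(j < n | (l < j)%N) (U j w - U l w) ^+ 2 in
  ('E_P'[Vt] <= (20 * L * M ^+ 2 / rho)%:E)%E.
Proof.
pose U := fun (j : 'I_n) (w : T') => `|X j i w * (inner beta (X j) w - Y j w)|.
pose Vt := fun w : T' => (n * (n - 1))%:R^-1 *
      \sum_(l < n) \sum_(j < n | (l < j)%N) (U j w - U l w) ^+ 2.
suff : ('E_P'[Vt] <= (20 * L * M ^+ 2 / rho)%:E)%E by move=> h; exact: h.
have n0 : (0 < n)%N by apply: leq_trans hn.
set s := \sum_(k < d) beta k ^+ 2.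
have s0 : 0 <= s by apply: sumr_ge0 => k _; exact: sqr_ge0.
have hs : s <= 4 / rho.
  rewrite -(sqr_sqrtr s0).
  have -> : 4 / rho = (2 / Num.sqrt rho) ^+ 2.
    by rewrite expr_div_n sqr_sqrtr ?(ltW hrho) // (_ : 2 ^+ 2 = 4 :> R) //; ring.
  rewrite !expr2; apply: ler_pM => //; exact: sqrtr_ge0.
set qv := \sum_a \sum_c beta a * covmx P x a c * beta c.
have hq : (\int[P]_w ((inner beta x w) ^+ 2)%:E = qv%:E)%E.
  exact: (@second_moment _ _ _ P d x beta M hxm hEx hx).
have hqL : qv <= L * s.
  apply: (@reindex_quad _ _ _ (supp betastar)).
  - by apply/matrixP => a c; rewrite !mxE covarianceC.
  - move=> k kF; apply/eqP; apply: contraNT kF => bk.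
    have kb : k \in supp beta by rewrite inE.
    by apply: (fintype.subsetP hS); apply: (fintype.subsetP hbeta).
  - by move=> a /(heig _ erefl) /andP[].
pose g : d.-tuple R * R -> R := fun p =>
  (tnth p.1 i * (\sum_(k < d) beta k * tnth p.1 k - p.2)) ^+ 2.
have mtn : forall k, measurable_fun setT (fun p : d.-tuple R * R => tnth p.1 k).
  move=> k; apply: (measurableT_comp (f := fun t : d.-tuple R => tnth t k)).
    exact: measurable_tnth.
  exact: measurable_fst.
have mg : measurable_fun setT g.
  apply: measurable_funX; apply: measurable_funM; first exact: mtn.
  apply: measurable_funB; last exact: measurable_snd.
  apply: (@mfun_sum_ord _ _ _ d xpredT (fun k (p : d.-tuple R * R) => beta k * tnth p.1 k)) => k.
  by apply: measurable_funM; [exact: measurable_cst|exact: mtn].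
have mjointP : forall (xx : 'I_d -> T' -> R) (yy : T' -> R),
    (forall k, measurable_fun setT (xx k)) -> measurable_fun setT yy ->
    measurable_fun setT (joint xx yy).
  move=> xx yy mxx myy; apply/measurable_fun_pairP; split => //.
  apply/measurable_fun_tnthP => k.
  by rewrite (_ : _ \o _ = xx k) //; apply/funext => w /=; rewrite tnth_mktuple.
have mjoint0 : measurable_fun setT (joint x y).
  apply/measurable_fun_pairP; split => //.
  apply/measurable_fun_tnthP => k.
  by rewrite (_ : _ \o _ = x k) //; apply/funext => w /=; rewrite tnth_mktuple.
have gE : forall (T0 : Type) (xx : 'I_d -> T0 -> R) (yy : T0 -> R) w,
    g (joint xx yy w) = (xx i w * (inner beta xx w - yy w)) ^+ 2.
  move=> T0 xx yy w; rewrite /g /joint /vec_of /inner /= tnth_mktuple.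
  by congr ((_ * (_ - _)) ^+ 2); apply: eq_bigr => k _; rewrite tnth_mktuple.
set K := (\int[P]_w (g (joint x y w))%:E)%E.
have hK : forall j, (\int[P']_w (U j w ^+ 2)%:E = K)%E.
  move=> j; rewrite /K.
  under eq_integral do rewrite /U real_normK ?num_real // -gE.
  apply: (@transfer _ _ _ _ T' T _ P' P (joint (X j) (Y j)) (joint x y) (EFin \o g)) => //.
  - exact: mjointP.
  - exact/measurable_EFinP.
  - by move=> v; rewrite /= lee_fin sqr_ge0.
  - by move=> A mA; apply: (hiid.1 j A mA).
have minner : measurable_fun setT (inner beta x).
  apply: (@mfun_sum_ord _ _ _ d xpredT (fun k w => beta k * x k w)) => k.
  by apply: measurable_funM; [exact: measurable_cst|exact: hxm].
have p0 : 0 <= M ^+ 2 * 2 by rewrite mulr_ge0 ?sqr_ge0.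
have hKb : (K <= (M ^+ 2 * 2 * qv + M ^+ 2 * 2)%:E)%E.
  rewrite /K.
  apply: (@le_trans _ _ (\int[P]_w ((M ^+ 2 * 2) * inner beta x w ^+ 2 + M ^+ 2 * 2)%:E)%E).
    apply: ae_ge0_le_integral => //.
    - by move=> w _; rewrite lee_fin sqr_ge0.
    - apply/measurable_EFinP. apply: (measurableT_comp (f := g) (g := joint x y)). exact: mg. exact: mjoint0.
    - by move=> w _; rewrite lee_fin addr_ge0 // mulr_ge0 // sqr_ge0.
    - apply/measurable_EFinP; apply: measurable_funD; last exact: measurable_cst.
      apply: measurable_funM; first exact: measurable_cst.
      exact: measurable_funX.
    - apply: filterS2 hx hy => w hxw hyw _; rewrite lee_fin gE.
      set a := x i w; set q := inner beta x w; set yy := y w.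
      have ha : a ^+ 2 <= M ^+ 2.
        rewrite -(real_normK (num_real a)) !expr2.
        by apply: ler_pM => //; apply: ltW; exact: hxw.
      have hy2 : yy ^+ 2 <= 1.
        rewrite -(real_normK (num_real yy)) -(expr1n _ 2) !expr2.
        by apply: ler_pM => //; apply: ltW; exact: hyw.
      have h3 := sqr_ge0 (q + yy).
      have h2 : (q - yy) ^+ 2 <= 2 * q ^+ 2 + 2 by nra.
      rewrite exprMn; apply: le_trans (ler_wpM2r (sqr_ge0 (q - yy)) ha) _.
      have M0 : 0 <= M ^+ 2 := sqr_ge0 M.
      nra.
  under eq_integral do rewrite EFinD EFinM.
  rewrite ge0_integralD //.
  - rewrite ge0_integralZl //.
    + have ic : (\int[P]_w (M ^+ 2 * 2)%:E = (M ^+ 2 * 2)%:E)%E.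
        transitivity ((M ^+ 2 * 2)%:E * P setT)%E; first exact: integral_cst.
        by rewrite probability_setT mule1.
      by rewrite hq ic -EFinM -EFinD.
    + by apply/measurable_EFinP; exact: measurable_funX.
    + by move=> w _; rewrite lee_fin sqr_ge0.
  - by move=> w _; rewrite -EFinM lee_fin mulr_ge0 // sqr_ge0.
  - rewrite (_ : (fun w => _) = EFin \o (fun w => M ^+ 2 * 2 * inner beta x w ^+ 2)).
      apply/measurable_EFinP; apply: measurable_funM; first exact: measurable_cst.
      exact: measurable_funX.
    by apply/funext => w /=; rewrite EFinM.
have mU : forall j, measurable_fun setT (U j).
  move=> j.
  have mh : measurable_fun setT (fun w => X j i w * (inner beta (X j) w - Y j w)).
    apply: measurable_funM; first exact: hXm.
    apply: measurable_funB; last exact: hYm.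
    apply: (@mfun_sum_ord _ _ _ d xpredT (fun k w => beta k * X j k w)) => k.
    by apply: measurable_funM; [exact: measurable_cst|exact: hXm].
  exact: (measurableT_comp (@normr_measurable R setT) mh).
have U0 : forall j w, 0 <= U j w by move=> j w; exact: normr_ge0.
have n1 : (n - 1)%:R != 0 :> R by rewrite pnatr_eq0 -lt0n subn_gt0.
have nn0 : n%:R != 0 :> R by rewrite pnatr_eq0 -lt0n.
have cE : (n * (n - 1))%:R^-1 * (n - 1)%:R = n%:R^-1 :> R.
  by rewrite natrM invfM -mulrA mulVf ?mulr1.
have c0 : 0 <= (n * (n - 1))%:R^-1 :> R by rewrite invr_ge0 ler0n.
have pw : forall w, Vt w <= \sum_(j < n) (n%:R^-1 * U j w ^+ 2).
  move=> w; rewrite /Vt.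
  have le1 : \sum_(l < n) \sum_(j < n | (l < j)%N) (U j w - U l w) ^+ 2 <=
      \sum_(l < n) \sum_(j < n | (l < j)%N) (U j w ^+ 2 + U l w ^+ 2).
    apply: ler_sum => l _; apply: ler_sum => j _.
    have h0 : 0 <= U j w * U l w by rewrite mulr_ge0.
    nra.
  have := @pair_sum _ n (fun j => U j w ^+ 2) n0; rewrite /= => e.
  rewrite e in le1.
  apply: le_trans (ler_wpM2l c0 le1) _.
  by rewrite mulrA cE big_distrr.
have Vt0 : forall w, 0 <= Vt w.
  move=> w; rewrite /Vt mulr_ge0 //; apply: sumr_ge0 => l _; apply: sumr_ge0 => j _.
  exact: sqr_ge0.
have mVt : measurable_fun setT Vt.
  apply: measurable_funM; first exact: measurable_cst.
  apply: (@mfun_sum_ord _ _ _ n xpredT (fun l w => \sum_(j < n | (l < j)%N) (U j w - U l w) ^+ 2)) => l.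
  apply: (@mfun_sum_ord _ _ _ n (fun j => (l < j)%N) (fun j w => (U j w - U l w) ^+ 2)) => j.
  by apply: measurable_funX; apply: measurable_funB.
have hE : ('E_P'[Vt] <= K)%E.
  rewrite expectation.unlock.
  apply: (@le_trans _ _ (\int[P']_w (\sum_(j < n) (n%:R^-1 * U j w ^+ 2))%:E)%E).
    apply: ge0_le_integral => //.
    - by move=> w _; rewrite lee_fin.
    - exact/measurable_EFinP.
    - apply/measurable_EFinP.
      apply: (@mfun_sum_ord _ _ _ n xpredT (fun j w => n%:R^-1 * U j w ^+ 2)) => j.
      by apply: measurable_funM; [exact: measurable_cst|exact: measurable_funX].
    - by move=> w _; rewrite lee_fin.
  under eq_integral do rewrite -sumEFin.
  rewrite ge0_integral_sum //; last 2 first.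
    - move=> j; apply/measurable_EFinP.
      by apply: measurable_funM; [exact: measurable_cst|exact: measurable_funX].
    - by move=> j w _; rewrite lee_fin mulr_ge0 ?invr_ge0 ?ler0n ?sqr_ge0.
  under eq_bigr do under eq_integral do rewrite EFinM.
  have e : forall j, (\int[P']_w ((n%:R^-1)%:E * (U j w ^+ 2)%:E) = (n%:R^-1)%:E * K)%E.
    move=> j; rewrite ge0_integralZl.
    - by rewrite hK.
    - exact: measurableT.
    - by apply/measurable_EFinP; exact: measurable_funX.
    - by move=> w _; rewrite lee_fin sqr_ge0.
    - by rewrite lee_fin invr_ge0 ler0n.
  rewrite (eq_bigr _ (fun j _ => e j)) sumr_const card_ord.
  set c : R := n%:R^-1.
  have -> : (((c%:E * K)%E *+ n)%R = ((n%:R : R)%:E * (c%:E * K))%E) by rewrite mule_natl.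
  by rewrite muleA -EFinM /c mulfV // mul1e.
apply: (le_trans hE); apply: (le_trans hKb); rewrite lee_fin.
exact: (@final_arith _ L rho (M ^+ 2) qv s hrho hrhoL (sqr_ge0 M) hqL hs).
Qed.
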